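(* Assume (A1)–(A3), (I) and (N) below. Then $\Omega=\Omega(\beta^*_{EGMM})$ is diagonal, and the EGMM weights $\lambda^{EGMM}_\ell=\lambda_\ell(\Omega^{-1})$ equal $$\lambda^{EGMM}_\ell=\frac{\pi_\ell^2p_\ell(1-p_\ell)/\sigma^2_{\epsilon,\ell}}{\sum_{k=1}^L\pi_k^2p_k(1-p_k)/\sigma^2_{\epsilon,k}},\qquad \sigma^2_{\epsilon,\ell}=\frac{[\Omega]_{\ell\ell}}{p_\ell(1-p_\ell)}.$$
   Context: Observe i.i.d. $(Y_i,D_i,\mathbf Z_i)$, $Y_i\in\mathbb R$, $D_i\in\{0,1\}$, $\mathbf Z_i=(Z_{1i},\dots,Z_{Li})'\in\{0,1\}^L$, $L\ge2$; potential outcomes $Y_i(0),Y_i(1)$, compliance type $D_i(\cdot):\{0,1\}^L\to\{0,1\}$, $D_i=D_i(\mathbf Z_i)$, $Y_i=D_iY_i(1)+(1-D_i)Y_i(0)$. $p_\ell=P(Z_{\ell i}=1)$, $\pi_\ell,\rho_\ell$ the differences of $\mathbb E[D_i\mid Z_{\ell i}=z]$, $\mathbb E[Y_i\mid Z_{\ell i}=z]$ between $z=1,0$, $\mathrm{Wald}_\ell=\rho_\ell/\pi_\ell$, $\gamma_\ell=\mathrm{Cov}(D_i,Z_{\ell i})$, $\boldsymbol\gamma=(\gamma_\ell)_\ell$, $\Sigma_Z=\mathrm{Var}(\mathbf Z_i)$, $\lambda_\ell(W)=\gamma_\ell[W\boldsymbol\gamma]_\ell/(\boldsymbol\gamma'W\boldsymbol\gamma)$.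 $g_i(\beta)$ has entries $(Y_i-\beta D_i)(Z_{\ell i}-p_\ell)$, $\Omega(\beta)=\mathbb E[g_i(\beta)g_i(\beta)']$ (positive definite). $\beta^*_{EGMM}$ is a fixed point of $\beta\mapsto\sum_\ell\lambda_\ell(\Omega(\beta)^{-1})\mathrm{Wald}_\ell$. The complier group of instrument $\ell$ is $\mathcal C_\ell=\{i:D_i(1,z_{-\ell})>D_i(0,z_{-\ell})\text{ for some }z_{-\ell}\}$, where $(z_\ell,z_{-\ell})$ denotes the instrument vector with $\ell$-th coordinate $z_\ell$. Assumptions: (A1) $(Y_i(0),Y_i(1),D_i(\cdot))$ independent of $\mathbf Z_i$. (A2) $D_i(z)$ nondecreasing in each coordinate for every $i$. (A3) $p_\ell>0$, $\pi_\ell>0$ for all $\ell$; $\Sigma_Z$ positive definite. (I) $Z_{1i},\dots,Z_{Li}$ mutually independent and jointly independent of $(Y_i(0),Y_i(1),D_i(\cdot))$. (N) $\mathcal C_\ell\cap\mathcal C_k=\emptyset$ for all $\ell\ne k$. *)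

(* Defs.v *)
From HB Require Import structures.
From mathcomp Require Import all_boot all_order all_algebra.
From mathcomp Require Import all_classical all_reals all_analysis.
Set Implicit Arguments. Unset Strict Implicit. Unset Printing Implicit Defensive.
Import Order.TTheory GRing.Theory Num.Theory.
Local Open Scope classical_set_scope.
Local Open Scope ring_scope.

(* Instrument vectors z in {0,1}^L, and compliance types D(.) : {0,1}^L -> {0,1}. *)
Notation ivec L := {ffun 'I_L -> bool}.
Notation ctype L := {ffun ivec L -> bool}.

Definition setcoord L (z : ivec L) (l : 'I_L) (b : bool) : ivec L :=
  [ffun j => if j == l then b else z j].

Definition posdef (R : numDomainType) n (M : 'M[R]_n) : Prop :=
  forall v : 'cV[R]_n, v != 0 -> 0 < (v^T *m M *m v) ord0 ord0.

Section Model.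
Context {R : realType} {dT : measure_display} {T : measurableType dT}.
Variable P : probability T R.
Variable L : nat.
Variables (Y0 Y1 : T -> R) (Dt : T -> ctype L) (Z : T -> ivec L).

(* Real-valued expectation (finite under the moment assumptions below). *)
Definition Ex (X : T -> R) : R := fine ('E_P[X])%E.
Definition Pr (A : set T) : R := fine (P A).

Definition Dobs (w : T) : bool := Dt w (Z w).
Definition Dv (w : T) : R := (Dobs w)%:R.
Definition Yv (w : T) : R := if Dobs w then Y1 w else Y0 w.
Definition Zv (l : 'I_L) (w : T) : R := (Z w l)%:R.

Definition p (l : 'I_L) : R := Pr [set w | Z w l = true].

Definition condE (X : T -> R) (l : 'I_L) (b : bool) : R :=
  Ex (fun w => X w * (Z w l == b)%:R) / Pr [set w | Z w l = b].

Definition pi_ (l : 'I_L) : R := condE Dv l true - condE Dv l false.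
Definition rho (l : 'I_L) : R := condE Yv l true - condE Yv l false.
Definition Wald (l : 'I_L) : R := rho l / pi_ l.

Definition gamma (l : 'I_L) : R :=
  Ex (fun w => Dv w * Zv l w) - Ex Dv * Ex (Zv l).
Definition gammav : 'cV[R]_L := \col_l gamma l.

Definition SigmaZ : 'M[R]_L :=
  \matrix_(l, k) (Ex (fun w => (Zv l w - p l) * (Zv k w - p k))).

Definition Omega (beta : R) : 'M[R]_L :=
  \matrix_(l, k) Ex (fun w => ((Yv w - beta * Dv w) * (Zv l w - p l)) *
                              ((Yv w - beta * Dv w) * (Zv k w - p k))).

Definition lambda (W : 'M[R]_L) (l : 'I_L) : R :=
  gamma l * (W *m gammav) l ord0 / (gammav^T *m W *m gammav) ord0 ord0.

Definition is_EGMM (beta : R) : Prop :=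
  beta = \sum_(l < L) lambda (invmx (Omega beta)) l * Wald l.

Definition complier (l : 'I_L) (w : T) : Prop :=
  exists z : ivec L, ~~ Dt w (setcoord z l false) && Dt w (setcoord z l true).

Definition A1 : Prop :=
  forall (A : set (R * R)) (d : ctype L) (z : ivec L), measurable A ->
    P ([set w | (Y0 w, Y1 w) \in A /\ Dt w = d] `&` [set w | Z w = z])
    = (P [set w | (Y0 w, Y1 w) \in A /\ Dt w = d] * P [set w | Z w = z])%E.

Definition A2 : Prop :=
  forall w (z : ivec L) (l : 'I_L), Dt w (setcoord z l false) ==> Dt w (setcoord z l true).

Definition A3 : Prop :=
  (forall l, 0 < p l) /\ (forall l, 0 < pi_ l) /\ posdef SigmaZ.

(* (I) Z_1,...,Z_L mutually independent and jointly independent of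
   (Y(0),Y(1),D(.)). *)
Definition Indep : Prop :=
  forall (A : set (R * R)) (d : ctype L) (z : ivec L), measurable A ->
    P ([set w | (Y0 w, Y1 w) \in A /\ Dt w = d] `&` [set w | Z w = z])
    = (P [set w | (Y0 w, Y1 w) \in A /\ Dt w = d] *
       \prod_(l < L) P [set w | Z w l = z l])%E.

Definition NoOverlap : Prop :=
  forall l k : 'I_L, l != k -> forall w, ~ (complier l w /\ complier k w).

(* Regularity: measurability and finite second moments (so that Omega,
   the conditional means, etc. are well defined). *)
Definition regular : Prop :=
  measurable_fun setT Y0 /\ measurable_fun setT Y1 /\
  (forall d, measurable [set w | Dt w = d]) /\
  (forall z, measurable [set w | Z w = z]) /\
  P.-integrable setT (fun w => (Y0 w ^+ 2)%:E) /\
  P.-integrable setT (fun w => (Y1 w ^+ 2)%:E).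

End Model.

(* Main.v *)
Require Import Defs.
From HB Require Import structures.
From mathcomp Require Import all_boot all_order all_algebra.
From mathcomp Require Import all_classical all_reals all_analysis.
From mathcomp Require Import measurable_realfun simple_functions lebesgue_integral_nonneg.
From mathcomp Require Import ring lra.
Import numFieldNormedType.Exports.
Import Order.TTheory GRing.Theory Num.Theory.
Local Open Scope ring_scope.

Section transfer.
Local Open Scope ereal_scope.
Context d (T : measurableType d) (R : realType).
Variables (m1 m2 : {measure set T -> \bar R}) (D1 D2 : set T).
Variables (mD1 : measurable D1) (mD2 : measurable D2) (k : {nonneg R}).
Hypothesis Hind : forall A, measurable A ->
  \int[m1]_(x in D1) (\1_A x)%:E = k%:num%:E * \int[m2]_(x in D2) (\1_A x)%:E.

Import HBNNSimple.

Let transfer_nnsfun (h : {nnsfun T >-> R}) :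
  \int[m1]_(x in D1) (h x)%:E = k%:num%:E * \int[m2]_(x in D2) (h x)%:E.
Proof.
under [LHS]eq_integral do rewrite fimfunE -fsumEFin//.
rewrite [LHS]ge0_integral_fsum//; last 2 first.
  - by move=> r; exact/measurable_EFinP/measurableT_comp.
  - by move=> n x _; rewrite EFinM nnfun_muleindic_ge0.
rewrite -[RHS]ge0_integralZl//; last 2 first.
  - by apply: measurableT_comp => //; exact: measurable_funTS.
  - by move=> x _; rewrite lee_fin.
under [RHS]eq_integral.
  move=> x xD; rewrite fimfunE -fsumEFin// ge0_mule_fsumr; last first.
    by move=> r; rewrite EFinM nnfun_muleindic_ge0.
  over.
rewrite [RHS]ge0_integral_fsum//; last 2 first.
  - by move=> r; apply/measurable_EFinP; do 2 apply/measurableT_comp => //.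
  - by move=> n x _; rewrite EFinM mule_ge0// nnfun_muleindic_ge0.
apply: eq_fsbigr => r _; rewrite ge0_integralZl//.
- by rewrite !integralZl_indic_nnsfun//= Hind// muleCA.
- exact/measurable_EFinP/measurableT_comp.
- by move=> t _; rewrite nnfun_muleindic_ge0.
Qed.

Lemma transfer (f : T -> \bar R) (mf : measurable_fun setT f) :
    (forall x, 0 <= f x) ->
  \int[m1]_(x in D1) f x = k%:num%:E * \int[m2]_(x in D2) f x.
Proof.
move=> f0; pose f_ := nnsfun_approx measurableT mf.
transitivity (limn (fun n => \int[m1]_(x in D1) (f_ n x)%:E)).
  rewrite -monotone_convergence//=.
  - apply: eq_integral => x /[!inE] xD; apply/esym/cvg_lim => //=.
    exact: cvg_nnsfun_approx.
  - by move=> n; apply: measurableT_comp => //; exact: measurable_funTS.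
  - by move=> n x _; rewrite lee_fin.
  - by move=> x _ a b ab; rewrite lee_fin//; exact/lefP/nd_nnsfun_approx.
rewrite (_ : \int[m2]_(x in D2) _ =
    limn (fun n => \int[m2]_(x in D2) (f_ n x)%:E)); last first.
  rewrite -monotone_convergence//=.
  - apply: eq_integral => x /[!inE] xD; apply/esym/cvg_lim => //.
    exact: cvg_nnsfun_approx.
  - by move=> n; exact/measurable_EFinP/measurable_funTS.
  - by move=> n x _; rewrite lee_fin.
  - by move=> x _ a b ab; rewrite lee_fin//; exact/lefP/nd_nnsfun_approx.
rewrite -limeMl//.
  by congr (limn _); apply/funext => n /=; rewrite transfer_nnsfun.
apply/ereal_nondecreasing_is_cvgn => a b ab; apply: ge0_le_integral => //.
- by move=> x _; rewrite lee_fin.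
- exact/measurable_EFinP/measurable_funTS.
- exact/measurable_EFinP/measurable_funTS.
- by move=> x _; rewrite lee_fin; exact/lefP/nd_nnsfun_approx.
Qed.
End transfer.

Section restr.
Local Open Scope ereal_scope.
Context d (T : measurableType d) (R : realType).
Variables (mu : {measure set T -> \bar R}) (E : set T) (mE : measurable E).

Lemma integral_mrestr (f : T -> \bar R) (mf : measurable_fun setT f) :
  (forall x, 0 <= f x) ->
  \int[mrestr mu mE]_x f x = \int[mu]_(x in E) f x.
Proof.
move=> f0.
have := @transfer _ T R (mrestr mu mE) mu setT E measurableT mE (NngNum (@ler01 R)).
rewrite /=; move=> H; rewrite H ?mul1e // => A mA; rewrite ?mul1e.
by rewrite !integral_indic //= /mrestr setIT.
Qed.
End restr.

Section aux.
Set Implicit Arguments. Unset Strict Implicit.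
Definition flipc L (z : ivec L) (k : 'I_L) := setcoord z k (~~ z k).

Lemma flipK L k : involutive (fun z : ivec L => flipc z k).
Proof.
move=> z; apply/ffunP => j; rewrite /flipc /setcoord !ffunE eqxx.
by case: eqP => [->|//]; rewrite negbK.
Qed.

Lemma flip_ne L (z : ivec L) k j : j != k -> flipc z k j = z j.
Proof. by move=> /negbTE jk; rewrite /flipc /setcoord ffunE jk. Qed.

Lemma flip_k L (z : ivec L) k : flipc z k k = ~~ z k.
Proof. by rewrite /flipc /setcoord ffunE eqxx. Qed.

Lemma comb (R : numFieldType) L (k : 'I_L) (q : 'I_L -> bool -> R) (H : ivec L -> R) :
  q k false = 1 - q k true ->
  (forall z, H (flipc z k) = H z) ->
  \sum_(z : ivec L) ((z k)%:R - q k true) * (\prod_(j < L) q j (z j)) * H z = 0.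
Proof.
move=> qf Hf.
set F := fun z : ivec L => ((z k)%:R - q k true) * (\prod_(j < L) q j (z j)) * H z.
have S2 : \sum_z F z = \sum_z F (flipc z k).
  by rewrite (reindex_inj (can_inj (flipK k))).
have Fz z : F z + F (flipc z k) = 0.
  rewrite /F Hf (bigD1 k) //= [X in _ + _ * X * _](bigD1 k) //= flip_k.
  have -> : \prod_(j < L | j != k) q j (flipc z k j) = \prod_(j < L | j != k) q j (z j).
    by apply: eq_bigr => j jk; rewrite flip_ne.
  by case: (z k) => /=; rewrite qf; ring.
have : \sum_z F z + \sum_z F z = 0.
  by rewrite {2}S2 -big_split /= big1.
rewrite -mulr2n => /eqP; rewrite mulrn_eq0 /= => /eqP; exact.
Qed.

Lemma noncomplier_inv (dT : measure_display) (T : measurableType dT) L (Dt : T -> ctype L) (w : T) m :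
  A2 Dt -> ~ complier Dt m w -> forall z, Dt w (flipc z m) = Dt w z.
Proof.
move=> HA2 Nc z.
have Hm : Dt w (setcoord z m false) = Dt w (setcoord z m true).
  have := HA2 w z m.
  case Ef: (Dt w (setcoord z m false)); case Et: (Dt w (setcoord z m true)) => //= _.
  by exfalso; apply: Nc; exists z; rewrite Ef Et.
have ss : forall b b', setcoord (setcoord z m b) m b' = setcoord z m b'.
  by move=> b b'; apply/ffunP => j; rewrite /setcoord !ffunE; case: eqP.
have zz : z = setcoord z m (z m).
  by apply/ffunP => j; rewrite /setcoord !ffunE; case: eqP => // ->.
have E b : Dt w (setcoord z m b) = Dt w (setcoord z m true) by case: b.
by rewrite /flipc E [in RHS]zz E.
Qed.

Lemma posdef_diag (R : numFieldType) n (M : 'M[R]_n) i : posdef M -> 0 < M i i.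
Proof.
move=> HM.
have v0 : delta_mx i (0 : 'I_1) != 0 :> 'cV[R]_n.
  apply/eqP => /matrixP /(_ i 0); rewrite !mxE !eqxx /= => /eqP.
  by rewrite oner_eq0.
have := HM _ v0.
by rewrite trmx_delta -rowE -colE !mxE.
Qed.

End aux.

Section model.
Local Open Scope classical_set_scope.
Local Open Scope ring_scope.
Context (R : realType) (dT : measure_display) (T : measurableType dT)
  (P : probability T R) (L : nat) (Y0 Y1 : T -> R) (Dt : T -> ctype L)
  (Z : T -> ivec L).
Hypothesis reg : regular P Y0 Y1 Dt Z.
Hypothesis HI : Indep P Y0 Y1 Dt Z.

Definition U w := (Y0 w, Y1 w).

Lemma mU : measurable_fun setT U.
Proof.
case: reg => mY0 [mY1 _]; exact: measurable_fun_pair.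
Qed.

Lemma mDd d : measurable [set w | Dt w = d].
Proof. by case: reg => _ [_ [? _]]. Qed.
Lemma mZz z : measurable [set w | Z w = z].
Proof. by case: reg => _ [_ [_ [? _]]]. Qed.

Lemma mDZ (Q : set (ctype L * ivec L)) : measurable [set w | Q (Dt w, Z w)].
Proof.
have -> : [set w | Q (Dt w, Z w)] = \bigcup_(t in [set` [seq x <- enum (predT : pred (ctype L * ivec L)) | `[< Q x >]]])
   ([set w | Dt w = t.1] `&` [set w | Z w = t.2]).
  apply/seteqP; split => w /=.
    move=> Qw; exists (Dt w, Z w) => //=.
    by rewrite mem_filter mem_enum andbT; apply/asboolP.
  move=> [[d0 z0]] /=; rewrite mem_filter mem_enum andbT => /asboolP Q0 [-> ->] //.
rewrite bigcup_seq; apply: bigsetU_measurable => -[d0 z0] _.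
exact: measurableI (mDd _) (mZz _).
Qed.

Lemma mfunDZ (phi : ctype L -> ivec L -> R) :
  measurable_fun setT (fun w => phi (Dt w) (Z w)).
Proof.
move=> _ B mB; rewrite setTI.
exact: (mDZ (fun x => B (phi x.1 x.2))).
Qed.

Lemma mZj j b : measurable [set w | Z w j = b].
Proof. exact: (mDZ (fun x => x.2 j = b)). Qed.

Lemma key (g : R * R -> R) (mg : measurable_fun setT g) (g0 : forall y, 0 <= g y) d z :
 (\int[P]_(w in [set w | Dt w = d] `&` [set w | Z w = z]) (g (U w))%:E =
 (\prod_(j < L) fine (P [set w | Z w j = z j]))%:E *
   \int[P]_(w in [set w | Dt w = d]) (g (U w))%:E)%E.
Proof.
have mE := measurableI _ _ (mDd d) (mZz z).
have mf : measurable_fun setT (fun y => (g y)%:E) by exact/measurable_EFinP.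
have f0 : {in setT, forall y, (0 <= (g y)%:E)%E} by move=> y _; rewrite lee_fin.
have mfU : measurable_fun setT (fun w => (g (U w))%:E).
  by apply/measurable_EFinP; apply: measurableT_comp mg mU.
have k0 : 0 <= \prod_(j < L) fine (P [set w | Z w j = z j]).
  by apply: prodr_ge0 => j _; apply: fine_ge0; apply: measure_ge0.
rewrite -(@integral_mrestr _ _ _ P _ mE) //; last by move=> x; rewrite lee_fin.
rewrite -(@integral_mrestr _ _ _ P _ (mDd d)) //; last by move=> x; rewrite lee_fin.
have E1 := ge0_integral_pushforward mU (mrestr P mE) measurableT mf f0.
have E2 := ge0_integral_pushforward mU (mrestr P (mDd d)) measurableT mf f0.
rewrite preimage_setT in E1 E2.
rewrite -E1 -E2.
have := @transfer _ _ R _ _ setT setT measurableT measurableT (NngNum k0).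
move=> /= H; apply: H => //; try exact: mU.
move=> ? ? A mA; rewrite !integral_indic //= /pushforward /mrestr.
rewrite setIT setIA.
have -> : U @^-1` A `&` [set w | Dt w = d] =
    [set w | (Y0 w, Y1 w) \in A /\ Dt w = d].
  by apply/seteqP; split => w /=; rewrite in_setE.
rewrite HI // muleC; congr (_ * _)%E.
rewrite -prodEFin; apply: eq_bigr => j _.
by rewrite fineK // fin_num_measure //; apply: mZj.
Qed.

Definition pix (x : (ctype L * ivec L)%type) :=
  Pr P ([set w | Dt w = x.1] `&` [set w | Z w = x.2]).

Lemma ExDZ (phi : ctype L -> ivec L -> R) :
  Ex P (fun w => phi (Dt w) (Z w)) = \sum_(x : (ctype L * ivec L)%type) phi x.1 x.2 * pix x.
Proof.
rewrite /Ex unlock.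
pose E (x : (ctype L * ivec L)%type) := [set w | Dt w = x.1] `&` [set w | Z w = x.2].
have mE x : measurable (E x) by exact: measurableI (mDd _) (mZz _).
rewrite (eq_integral (fun w => \sum_(x : (ctype L * ivec L)%type) ((phi x.1 x.2)%:E * (\1_(E x) w)%:E)%E)); last first.
  move=> w _; under eq_bigr do rewrite -EFinM.
  rewrite sumEFin; congr (_%:E).
  rewrite (bigD1 (Dt w, Z w)) //= big1 ?addr0; last first.
    move=> [d0 z0] /= Hne; rewrite indicE.
    case: (boolP (w \in E (d0, z0))) => [/set_mem [/= Hd Hz]|]; last by rewrite mulr0.
    by move: Hne; rewrite Hd Hz eqxx.
  by rewrite indicE mem_set ?mulr1.
rewrite integral_sum //; last first.
  by move=> x; apply: integrableZl => //; exact: integrable_indic.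
rewrite /pix /Pr.
rewrite (eq_bigr (fun x => (phi x.1 x.2 * fine (P (E x)))%:E)); first by rewrite sumEFin.
move=> x _; rewrite integralZl //; last exact: integrable_indic.
by rewrite integral_indic // setIT EFinM fineK // fin_num_measure.
Qed.

Definition qz j b := fine (P [set w | Z w j = b]).

Lemma qC j : qz j false = 1 - qz j true.
Proof.
rewrite /qz (_ : [set w | Z w j = false] = ~` [set w | Z w j = true]).
  rewrite probability_setC ?mZj //.
  have hx : P [set w | Z w j = true] \is a fin_num by apply: fin_num_measure; exact: mZj.
  by rewrite -[P _](fineK hx) -EFinB.
  exact: mZj.
by apply/seteqP; split => w /=; case: (Z w j).
Qed.

Lemma Ex_one : \sum_(x : (ctype L * ivec L)%type) 1 * pix x = 1.
Proof.
by rewrite -(ExDZ (fun _ _ => 1)) /Ex (_ : (fun _ => 1) = cst 1) // expectation_cst.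
Qed.

Lemma Ex_one' : \sum_(x : (ctype L * ivec L)%type) pix x = 1.
Proof. by rewrite -Ex_one; apply: eq_bigr => x _; rewrite mul1r. Qed.

Lemma Ex_Z l : \sum_(x : (ctype L * ivec L)%type) (x.2 l)%:R * pix x = p P Z l.
Proof.
rewrite -(ExDZ (fun _ z => (z l)%:R)) /Ex unlock /p /Pr.
rewrite (eq_integral (fun w => (\1_[set w | Z w l = true] w)%:E)); last first.
  by move=> w _; rewrite indicE; case E: (Z w l); [rewrite mem_set | rewrite memNset //= E].
by rewrite integral_indic ?setIT //; exact: mZj.
Qed.

Lemma gamma_eq l : A3 P Dt Z ->
  gamma P Dt Z l = pi_ P Dt Z l * p P Z l * (1 - p P Z l).
Proof.
move=> [Hp [_ HS]].
set p1 := p P Z l.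
have p0 : p1 != 0 by rewrite gt_eqF ?Hp.
have Hq : Pr P [set w | Z w l = false] = 1 - p1 by exact: qC.
pose A := \sum_(x : (ctype L * ivec L)%type) ((x.1 x.2)%:R * (x.2 l == true)%:R) * pix x.
pose B := \sum_(x : (ctype L * ivec L)%type) ((x.1 x.2)%:R * (x.2 l == false)%:R) * pix x.
have q0 : 1 - p1 != 0.
  have := posdef_diag l HS; rewrite /SigmaZ mxE.
  rewrite (ExDZ (fun _ z => ((z l)%:R - p P Z l) * ((z l)%:R - p P Z l))) /=.
  rewrite (eq_bigr (fun x : (ctype L * ivec L)%type =>
     (1 - 2 * p P Z l) * ((x.2 l)%:R * pix x) + (p P Z l) ^+ 2 * (1 * pix x))); last first.
    by move=> x _; case: (x.2 l) => /=; ring.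
  rewrite big_split /= -!mulr_sumr Ex_Z mul1r Ex_one' -/p1 => H.
  apply/eqP => E0; have e1 : p1 = 1 by apply/eqP; rewrite eq_sym -subr_eq0 E0.
  by move: H; rewrite e1; rewrite (_ : _ + _ = 0) ?ltxx //; ring.
have eA : Ex P (fun w => Dv Dt Z w * (Z w l == true)%:R) = A
  by exact: (ExDZ (fun d z => (d z)%:R * (z l == true)%:R)).
have eB : Ex P (fun w => Dv Dt Z w * (Z w l == false)%:R) = B
  by exact: (ExDZ (fun d z => (d z)%:R * (z l == false)%:R)).
have eDZ : Ex P (fun w => Dv Dt Z w * Zv Z l w) = A.
  rewrite (ExDZ (fun d z => (d z)%:R * (z l)%:R)); apply: eq_bigr => x _.
  by case: (x.2 l).
have eD : Ex P (Dv Dt Z) = A + B.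
  rewrite (ExDZ (fun d z => (d z)%:R)) /A /B -big_split; apply: eq_bigr => x _ /=.
  by case: (x.2 l) => /=; ring.
have eZ : Ex P (Zv Z l) = p1 by rewrite /p1 -(Ex_Z l) (ExDZ (fun _ z => (z l)%:R)).
rewrite /gamma /pi_ /condE eA eB eDZ eD eZ Hq -/p1.
rewrite /Pr -/(Pr P _) -/(p P Z l) -/p1.
by field; rewrite p0 q0.
Qed.

Variable beta : R.
Definition gb (b : bool) (y : R * R) : R := (if b then y.2 - beta else y.1) ^+ 2.

Lemma gb_ge0 b y : 0 <= gb b y.
Proof. by rewrite /gb sqr_ge0. Qed.

Lemma mgb b : measurable_fun setT (gb b).
Proof.
rewrite /gb; case: b.
  have mf : measurable_fun setT (fun y : R * R => y.2 - beta).
    by apply: measurable_funB; [exact: measurable_snd | exact: measurable_cst].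
  by rewrite (_ : (fun y => _) = (fun y : R * R => y.2 - beta) \* (fun y => y.2 - beta));
    [apply: measurable_funM | apply/funext => y; rewrite expr2].
by rewrite (_ : (fun y => _) = (fun y : R * R => y.1) \* (fun y => y.1));
  [apply: measurable_funM; exact: measurable_fst | apply/funext => y; rewrite expr2].
Qed.

Definition Bnd w := Y0 w ^+ 2 + 2 * Y1 w ^+ 2 + 2 * beta ^+ 2.

Lemma int_Bnd : P.-integrable setT (fun w => (Bnd w)%:E).
Proof.
case: reg => _ [_ [_ [_ [i0 i1]]]].
rewrite /Bnd; under eq_fun do rewrite !EFinD.
apply: integrableD => //; first apply: integrableD => //.
  by under eq_fun do rewrite EFinM; apply: integrableZl.
exact: (finite_measure_integrable_cst P (2 * beta ^+ 2) measurableT).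
Qed.

Lemma gb_le b w : gb b (U w) <= Bnd w.
Proof.
rewrite /gb /Bnd /U /=; case: b.
  have := sqr_ge0 (Y1 w + beta); have := sqr_ge0 (Y0 w); nra.
have := sqr_ge0 (Y1 w); have := sqr_ge0 beta; nra.
Qed.

Lemma mgbU b : measurable_fun setT (fun w => gb b (U w)).
Proof. exact: measurableT_comp (mgb b) mU. Qed.

Lemma int_gbU b D : measurable D -> P.-integrable D (fun w => (gb b (U w))%:E).
Proof.
move=> mD; apply: (integrableS measurableT mD (@subsetT _ D)).
apply: (le_integrable measurableT _ _ int_Bnd).
  exact/measurable_EFinP/mgbU.
move=> w _; rewrite !abse_EFin lee_fin !ger0_norm ?gb_le ?gb_ge0 //.
by apply: le_trans (gb_le b w); apply: gb_ge0.
Qed.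

Definition Gd d b := fine (\int[P]_(w in [set w | Dt w = d]) (gb b (U w))%:E)%E.

Lemma int_h d z : (\int[P]_w ((((Dt w == d) && (Z w == z))%:R * gb (d z) (U w))%:E) =
  (\prod_(j < L) qz j (z j) * Gd d (d z))%:E)%E.
Proof.
have -> : (fun w => ((((Dt w == d) && (Z w == z))%:R * gb (d z) (U w))%:E)) =
   ((fun w => (gb (d z) (U w))%:E) \_ ([set w | Dt w = d] `&` [set w | Z w = z])).
  apply/funext => w; rewrite /patch.
  case: ifPn => [/set_mem [/= Hd Hz]|]; first by rewrite Hd Hz !eqxx mul1r.
  rewrite notin_setE /= => H.
  case: eqP => [Hd|] /=; last by rewrite mul0r.
  case: eqP => [Hz|] /=; last by rewrite mul0r.
  by exfalso; apply: H.
rewrite -integral_mkcond key //; [|exact: mgb|exact: gb_ge0].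
rewrite /Gd EFinM fineK //.
by apply: integrable_fin_num; [exact: mDd | exact: int_gbU (mDd d)].
Qed.

Lemma Omega_off l k : l != k -> A2 Dt -> NoOverlap Dt ->
  Omega P Y0 Y1 Dt Z beta l k = 0.
Proof.
move=> lk HA2 HN.
rewrite /Omega mxE /Ex unlock.
pose c := fun z : ivec L => ((z l)%:R - p P Z l) * ((z k)%:R - p P Z k).
pose h (x : (ctype L * ivec L)%type) w :=
  (((Dt w == x.1) && (Z w == x.2))%:R * gb (x.1 x.2) (U w)).
rewrite (eq_integral (fun w => \sum_(x : (ctype L * ivec L)%type) ((c x.2 * h x w)%:E))%E);
  last first.
  move=> w _; rewrite sumEFin; congr (_%:E).
  rewrite (bigD1 (Dt w, Z w)) //= big1 ?addr0; last first.
    move=> [d0 z0] /= Hne; rewrite /h /=.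
    case: eqP => [Hd|] /=; last by rewrite mul0r mulr0.
    case: eqP => [Hz|] /=; last by rewrite mul0r mulr0.
    by exfalso; move: Hne; rewrite Hd Hz eqxx.
  rewrite /h /c /= !eqxx mul1r /gb /U /Yv /Dv /Zv /Dobs /=.
  by case: (Dt w (Z w)) => /=; ring.
have ih : forall x, P.-integrable setT (fun w => (h x w)%:E).
  move=> x.
  apply: (@le_integrable _ _ _ P setT measurableT _ (fun w => (gb (x.1 x.2) (U w))%:E)).
  - apply/measurable_EFinP; apply: measurable_funM; last exact: mgbU.
    exact: (mfunDZ (fun d0 z0 => ((d0 == x.1) && (z0 == x.2))%:R)).
  - move=> w _; rewrite !abse_EFin lee_fin normrM.
    by case: ((Dt w == x.1) && (Z w == x.2)); rewrite ?normr1 ?normr0 ?mul1r ?mul0r ?normr_ge0 ?ler_norm.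
  - exact: int_gbU.
rewrite integral_sum //; last first.
  move=> x; under eq_fun do rewrite EFinM.
  exact: integrableZl.
under eq_bigr => x _.
  rewrite (_ : (\int[P]_w (c x.2 * h x w)%:E)%E =
     (c x.2 * (\prod_(j < L) qz j (x.2 j) * Gd x.1 (x.1 x.2)))%:E); last first.
    under eq_integral do rewrite EFinM.
    by rewrite integralZl // int_h -EFinM.
  over.
rewrite sumEFin /=.
rewrite -(pair_bigA _ (fun d z => c z * (\prod_(j < L) qz j (z j) * Gd d (d z)))) /=.
apply: big1 => d _.
have [[w Hw]|nw] := pselect (exists w, Dt w = d); last first.
  have e0 : [set w | Dt w = d] = set0.
    by apply/seteqP; split => w0 //= H0; apply: nw; exists w0.
  by apply: big1 => z _; rewrite /Gd e0 integral_set0 /= !mulr0.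
have pq m : p P Z m = qz m true by [].
have [cl|ncl] := pselect (complier Dt l w).
  have nck : ~ complier Dt k w by move=> ck; apply: (HN l k lk w).
  rewrite (eq_bigr (fun z : ivec L => ((z k)%:R - qz k true) * (\prod_(j < L) qz j (z j)) *
     (((z l)%:R - qz l true) * Gd d (d z)))); last by move=> z _; rewrite /c !pq; ring.
  apply: comb; first exact: qC.
  move=> z; rewrite flip_ne // -Hw.
  by rewrite (noncomplier_inv HA2 nck).
rewrite (eq_bigr (fun z : ivec L => ((z l)%:R - qz l true) * (\prod_(j < L) qz j (z j)) *
   (((z k)%:R - qz k true) * Gd d (d z)))); last by move=> z _; rewrite /c !pq; ring.
apply: comb; first exact: qC.
move=> z; rewrite flip_ne 1?eq_sym // -Hw.
by rewrite (noncomplier_inv HA2 ncl).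
Qed.

End model.

Theorem corollary2 (R : realType) (dT : measure_display) (T : measurableType dT)
  (P : probability T R) (L : nat) (Y0 Y1 : T -> R) (Dt : T -> ctype L)
  (Z : T -> ivec L) (betaE : R) :
  (2 <= L)%N ->
  regular P Y0 Y1 Dt Z ->
  A1 P Y0 Y1 Dt Z ->
  A2 Dt ->
  A3 P Dt Z ->
  Indep P Y0 Y1 Dt Z ->
  NoOverlap Dt ->
  (forall beta, posdef (Omega P Y0 Y1 Dt Z beta)) ->
  is_EGMM P Y0 Y1 Dt Z betaE ->
  let Om := Omega P Y0 Y1 Dt Z betaE in
  let sig2 := fun l : 'I_L => Om l l / (p P Z l * (1 - p P Z l)) in
  let num := fun l : 'I_L =>
    pi_ P Dt Z l ^+ 2 * p P Z l * (1 - p P Z l) / sig2 l in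
  (forall l k : 'I_L, l != k -> Om l k = 0) /\
  (forall l : 'I_L,
     lambda P Dt Z (invmx Om) l = num l / \sum_(k < L) num k).
Proof.
move=> _ reg _ HA2 HA3 HI HN Hpd _ Om sig2 num.
have off : forall l k : 'I_L, l != k -> Om l k = 0.
  by move=> l k lk; exact: (@Omega_off _ _ _ _ _ _ _ _ _ reg HI betaE _ _ lk HA2 HN).
split => // l.
pose dv := \row_i Om i i.
pose e := \row_i (Om i i)^-1.
have pos i : 0 < Om i i by exact: (posdef_diag i (Hpd betaE)).
have numE i : num i = gamma P Dt Z i * ((Om i i)^-1 * gamma P Dt Z i).
  by rewrite /num /sig2 (@gamma_eq _ _ _ _ _ _ _ _ _ reg i HA3) invfM invrK; ring.
clearbody num sig2 Om.
have Odiag : Om = diag_mx dv.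
  apply/matrixP => i j; rewrite !mxE.
  by case: eqVneq => [->|ij]; rewrite ?mulr1n ?mulr0n // off.
have OD : Om *m diag_mx e = 1%:M.
  rewrite Odiag mulmx_diag; apply/matrixP => i j; rewrite !mxE.
  by case: eqVneq => [->|ij]; rewrite ?mulr1n ?mulr0n ?mulfV ?gt_eqF.
have Inv : invmx Om = diag_mx e.
  have [uO _] := mulmx1_unit OD.
  by rewrite -[invmx Om]mulmx1 -OD mulmxA mulVmx // mul1mx.
rewrite /lambda Inv -mulmxA mul_diag_mx !mxE.
rewrite (eq_bigr (fun i => gamma P Dt Z i * ((Om i i)^-1 * gamma P Dt Z i))); last first.
  by move=> i _; rewrite !mxE.
rewrite numE; congr (_ / _); last by apply: eq_bigr => i _; rewrite numE.
Qed.
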